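(* Let $(X,S)$ be an $S$-metric space, $r\ge0$, and let $\{x_n\}$ be an $r$-statistically convergent sequence in $X$. Then $\operatorname{diam}(st\text{-}LIM^r x_n)\le 3r$.
   Context: An $S$-metric on a nonempty set $X$ is a function $S:X^3\to[0,\infty)$ such that for all $x,y,z,a\in X$: $S(x,y,z)=0$ if and only if $x=y=z$, and $S(x,y,z)\le S(x,x,a)+S(y,y,a)+S(z,z,a)$. For $B\subset\mathbb N$ the natural density is $\delta(B)=\lim_{n\to\infty}\frac{|\{k\in B:k\le n\}|}{n}$ when the limit exists. For $r\ge0$, $\{x_n\}$ is $r$-statistically convergent to $x$ if for every $\varepsilon>0$, $\delta(\{n\in\mathbb N: S(x_n,x_n,x)\ge r+\varepsilon\})=0$; $st\text{-}LIM^r x_n$ denotes the set of all $x\in X$ to which $\{x_n\}$ is $r$-statistically convergent, and $\{x_n\}$ is called $r$-statistically convergent if this set is nonempty. For $A\subset X$, $\operatorname{diam}(A)=\sup\{S(x,x,y): x,y\in A\}$. *)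

(* Defs.v *)
From Stdlib Require Import Reals ClassicalEpsilon.
From Coquelicot Require Import Coquelicot.
Open Scope R_scope.

Definition is_S_metric {X : Type} (S : X -> X -> X -> R) : Prop :=
  (forall x y z, 0 <= S x y z) /\
  (forall x y z, S x y z = 0 <-> (x = y /\ y = z)) /\
  (forall x y z a, S x y z <= S x x a + S y y a + S z z a).

Definition ind (B : nat -> Prop) (k : nat) : R :=
  if excluded_middle_informative (B k) then 1 else 0.

Fixpoint count_upto (B : nat -> Prop) (n : nat) : R :=
  match n with
  | O => 0
  | S m => count_upto B m + ind B (S m)
  end.

Definition density_zero (B : nat -> Prop) : Prop :=
  is_lim_seq (fun n => count_upto B n / INR n) 0.

(** x is in st-LIM^r x_n (sequence indexed by positive naturals; x 0 unused) *)
Definition st_LIM {X : Type} (S : X -> X -> X -> R) (r : R) (x : nat -> X) (l : X) : Prop :=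
  forall eps : R, 0 < eps ->
    density_zero (fun n => (1 <= n)%nat /\ S (x n) (x n) l >= r + eps).

Definition diam {X : Type} (S : X -> X -> X -> R) (A : X -> Prop) : Rbar :=
  Lub_Rbar (fun d => exists x y, A x /\ A y /\ d = S x x y).

(* Main.v *)
Require Import Defs.
From Stdlib Require Import Reals Lra Lia Classical ClassicalEpsilon.
From Coquelicot Require Import Coquelicot.
Open Scope R_scope.

Lemma count_cover (B1 B2 : nat -> Prop) :
  (forall k, (1 <= k)%nat -> B1 k \/ B2 k) ->
  forall n, INR n <= count_upto B1 n + count_upto B2 n.
Proof.
  intros H n; induction n as [|n IH]; simpl count_upto.
  - simpl; lra.
  - rewrite S_INR. unfold Defs.ind.
    assert (hh : (1 <= S n)%nat) by lia.
    destruct (H (S n) hh) as [h|h];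
    destruct (excluded_middle_informative (B1 (S n)));
    destruct (excluded_middle_informative (B2 (S n))); try tauto; lra.
Qed.

Lemma dens_two (B1 B2 : nat -> Prop) :
  density_zero B1 -> density_zero B2 ->
  exists n, (1 <= n)%nat /\ ~ B1 n /\ ~ B2 n.
Proof.
  intros H1 H2.
  destruct (classic (exists n, (1 <= n)%nat /\ ~ B1 n /\ ~ B2 n)) as [e|ne]; [exact e|].
  exfalso.
  assert (Hc : forall k, (1 <= k)%nat -> B1 k \/ B2 k).
  { intros k hk. destruct (classic (B1 k)); [now left|].
    destruct (classic (B2 k)); [now right|]. exfalso; apply ne; eauto. }
  apply is_lim_seq_spec in H1. apply is_lim_seq_spec in H2.
  assert (hp : 0 < /2) by lra.
  destruct (H1 (mkposreal _ hp)) as [N1 HN1].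
  destruct (H2 (mkposreal _ hp)) as [N2 HN2].
  set (n := S (Nat.max N1 N2)).
  assert (a1 := HN1 n ltac:(unfold n; lia)).
  assert (a2 := HN2 n ltac:(unfold n; lia)).
  simpl in a1, a2.
  assert (hc := count_cover B1 B2 Hc n).
  assert (hn : 0 < INR n) by (apply lt_0_INR; unfold n; lia).
  rewrite Rminus_0_r in a1, a2.
  apply Rabs_def2 in a1. apply Rabs_def2 in a2.
  destruct a1 as [a1 _]. destruct a2 as [a2 _].
  assert (count_upto B1 n / INR n + count_upto B2 n / INR n >= 1).
  { unfold Rdiv. rewrite <- Rmult_plus_distr_r.
    apply Rle_ge. apply (Rmult_le_reg_r (INR n)); auto.
    rewrite Rmult_assoc, Rinv_l by lra. lra. }
  idtac; match goal with |- _ => idtac end; simpl in *; lra.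
Qed.

Theorem theorem4p2 (X : Type) (S : X -> X -> X -> R) (r : R) (x : nat -> X) :
  is_S_metric S -> 0 <= r ->
  (exists l, st_LIM S r x l) ->
  Rbar_le (diam S (st_LIM S r x)) (Finite (3 * r)).
Proof.
  intros [Hnn [Hz Htri]] Hr _.
  assert (Hsym : forall a b, S a a b <= S b b a).
  { intros a b. pose proof (Htri a a b a).
    assert (S a a a = 0) by (apply Hz; auto). lra. }
  assert (key : forall y z, st_LIM S r x y -> st_LIM S r x z -> S y y z <= 3 * r).
  { intros y z Hy Hz'.
    destruct (Rle_or_lt (S y y z) (3 * r)) as [h|h]; [exact h|exfalso].
    set (eps := (S y y z - 3 * r) / 6).
    assert (he : 0 < eps) by (unfold eps; lra).
    destruct (dens_two _ _ (Hy eps he) (Hz' eps he)) as [n [hn [n1 n2]]].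
    assert (c1 : S (x n) (x n) y < r + eps).
    { apply Rnot_ge_lt. intro; apply n1; auto. }
    assert (c2 : S (x n) (x n) z < r + eps).
    { apply Rnot_ge_lt. intro; apply n2; auto. }
    pose proof (Htri y y z (x n)).
    pose proof (Hsym y (x n)). pose proof (Hsym z (x n)).
    unfold eps in *. lra. }
  unfold diam.
  destruct (Lub_Rbar_correct (fun d => exists x0 y, st_LIM S r x x0 /\ st_LIM S r x y /\ d = S x0 x0 y)) as [_ Hl].
  apply Hl. intros d [a [b [ha [hb ->]]]]. simpl. apply key; auto.
Qed.
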